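(* Let $q,q^\dagger\in[1,2]$ and let $s^\dagger,s'$ be real numbers with $s'<s^\dagger-\left(\frac{d}{q^\dagger}-\frac dq\right)_+$, where $x_+=\max\{x,0\}$. Then $B^{s^\dagger,q^\dagger\wedge q,q}(\mathcal Z)$ is continuously embedded in $B^{s',q}(\mathcal Z)$, where $q^\dagger\wedge q=\min\{q^\dagger,q\}$.
   Context: Let $d\ge1$, $\mathcal X\subset\mathbb R^d$ with a fixed basis $\{\phi_\ell\}_{\ell\ge1}$, $\mathcal T\subset[0,T]$ bounded, $\mathcal Z=\mathcal X\times\mathcal T$. Functions on $\mathcal Z$ are identified with sequences of temporal functions via $u(\mathbf x,t)=\sum_{\ell}u_\ell(t)\phi_\ell(\mathbf x)$. For $p\ge1$, $\|u_\ell\|_p$ denotes the $L^p(\mathcal T)$-norm of the temporal coefficient function. For $r,p\ge1$ and $s\in\mathbb R$, let $\tau_r(s)=\frac sd+\frac12-\frac1r$, $\|u\|_{s,r,p}=\big(\sum_\ell \ell^{\tau_r(s)r}\|u_\ell\|_p^r\big)^{1/r}$, $B^{s,r,p}(\mathcal Z)=\{u:\|u\|_{s,r,p}<\infty\}$, and $B^{s,q}(\mathcal Z):=B^{s,q,q}(\mathcal Z)$. *)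

(* Defs.v *)
From HB Require Import structures.
From mathcomp Require Import all_boot all_order all_algebra.
From mathcomp Require Import all_classical all_reals all_analysis.
Set Implicit Arguments. Unset Strict Implicit. Unset Printing Implicit Defensive.
Import Order.TTheory GRing.Theory Num.Theory.
Local Open Scope classical_set_scope.
Local Open Scope ring_scope.

(* A function u on Z = X x T is identified with the sequence of its temporal
   coefficient functions u_l : R -> R (l >= 1); the value u 0 is ignored. *)
Definition Lp_T {R : realType} (Tset : set R) (p : R) (f : R -> R) : \bar R :=
  Lnorm (@lebesgue_measure R) p%:E ((EFin \o f) \_ Tset).

Definition tau {R : realType} (d : nat) (r s : R) : R :=
  s / d%:R + 2^-1 - r^-1.

Definition besov_norm {R : realType} (d : nat) (Tset : set R) (s r p : R)
  (u : nat -> R -> R) : \bar R :=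
  ((\sum_(1 <= l <oo)
      ((l%:R `^ (tau d r s * r))%:E * (Lp_T Tset p (u l)) `^ r)) `^ r^-1)%E.

Definition besov_space {R : realType} (d : nat) (Tset : set R) (s r p : R)
  : set (nat -> R -> R) :=
  [set u | (besov_norm d Tset s r p u < +oo)%E].

Definition continuously_embedded {R : realType} (d : nat) (Tset : set R)
  (s1 r1 p1 s2 r2 p2 : R) : Prop :=
  besov_space d Tset s1 r1 p1 `<=` besov_space d Tset s2 r2 p2 /\
  exists C : R, 0 < C /\
    forall u, besov_space d Tset s1 r1 p1 u ->
      (besov_norm d Tset s2 r2 p2 u <= C%:E * besov_norm d Tset s1 r1 p1 u)%E.

(* Main.v *)
Require Import Defs.
From HB Require Import structures.
From mathcomp Require Import all_boot all_order all_algebra.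
From mathcomp Require Import all_classical all_reals all_analysis.
From mathcomp Require Import ring lra.
Import Order.TTheory GRing.Theory Num.Theory.
Local Open Scope classical_set_scope.
Local Open Scope ring_scope.

Lemma pt_ineq (R : realType) (r q w v a s : R) : 0 < r -> r <= q ->
  0 <= w -> 0 <= a -> v <= w `^ (q / r) -> w * a `^ r <= s ->
  v * a `^ q <= s `^ ((q - r) / r) * (w * a `^ r).
Proof.
move=> r0 rq w0 a0 vw bs.
set b := w * a `^ r.
have b0 : 0 <= b by rewrite mulr_ge0 // powR_ge0.
have e : b `^ (q / r) = w `^ (q / r) * a `^ q.
  rewrite powRM ?powR_ge0 // -powRrM; congr (_ * _); congr (_ `^ _).
  by rewrite mulrC -mulrA mulVf ?mulr1 // gt_eqF.
have hq : 1 + (q - r) / r != 0.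
  by rewrite gt_eqF // (lt_le_trans ltr01) // lerDl divr_ge0 // ?subr_ge0 // ltW.
have e2 : b `^ (q / r) = b * b `^ ((q - r) / r).
  have -> : q / r = 1 + (q - r) / r by field; rewrite gt_eqF.
  by rewrite powRD ?powRr1 //; apply/implyP; rewrite (negbTE hq).
apply: (le_trans (ler_wpM2r (powR_ge0 _ _) vw)).
rewrite -e e2 mulrC; apply: ler_wpM2r => //.
apply: ge0_ler_powR => //.
- by rewrite divr_ge0 ?subr_ge0 // ltW.
- by rewrite nnegrE (le_trans b0 bs).
Qed.

Lemma tau_ineq (R : realType) (d : nat) (q qd sd s' : R) :
  (1 <= d)%N -> 1 <= q -> 1 <= qd ->
  s' < sd - Num.max (d%:R / qd - d%:R / q) 0 ->
  tau d q s' * q <= tau d (Num.min qd q) sd * (Num.min qd q) * (q / Num.min qd q).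
Proof.
move=> d1 q1 qd1 hs.
have q0 : 0 < q by apply: lt_le_trans q1.
have qd0 : 0 < qd by apply: lt_le_trans qd1.
have D0 : 0 < d%:R :> R by rewrite ltr0n.
set r := Num.min qd q.
have r0 : 0 < r by rewrite lt_min q0 qd0.
have -> : tau d r sd * r * (q / r) = tau d r sd * q.
  by rewrite -mulrA [r * _]mulrC -mulrA mulVf ?mulr1 // gt_eqF.
rewrite ler_pM2r //.
have hM1 : d%:R / qd - d%:R / q <= Num.max (d%:R / qd - d%:R / q) 0.
  by rewrite le_max lexx.
have hM2 : 0 <= Num.max (d%:R / qd - d%:R / q) 0 by rewrite le_max lexx orbT.
have key : s' <= sd - (d%:R * r^-1 - d%:R * q^-1).
  by rewrite /r; have [hle|hlt] := leP qd q; lra.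
rewrite /tau.
have h1 : s' / d%:R <= (sd - (d%:R * r^-1 - d%:R * q^-1)) / d%:R.
  by rewrite ler_pM2r // invr_gt0.
have h2 : (sd - (d%:R * r^-1 - d%:R * q^-1)) / d%:R = sd / d%:R - r^-1 + q^-1.
  by field; rewrite !gt_eqF.
rewrite h2 in h1; lra.
Qed.

Lemma series_ineq (R : realType) (r q : R) (w v : nat -> R) (L : nat -> \bar R) :
  0 < r -> r <= q -> (forall l, (0 < l)%N -> 0 < w l) ->
  (forall l, (0 < l)%N -> v l <= w l `^ (q / r)) ->
  (forall l, (0 < l)%N -> 0 <= v l) ->
  (forall l, (0 <= L l)%E) ->
  ((\sum_(1 <= l <oo | (0 < l)%N) ((w l)%:E * L l `^ r)) `^ r^-1 < +oo)%E ->
  ((\sum_(1 <= l <oo | (0 < l)%N) ((v l)%:E * L l `^ q)) `^ q^-1 <=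
   (\sum_(1 <= l <oo | (0 < l)%N) ((w l)%:E * L l `^ r)) `^ r^-1)%E.
Proof.
move=> r0 rq w0 vw v0 L0 hN.
have q0 : 0 < q by apply: lt_le_trans rq.
set S := (\sum_(1 <= l <oo | (0 < l)%N) ((w l)%:E * L l `^ r))%E in hN *.
have x0 : forall l, (0 < l)%N -> (0 <= (w l)%:E * L l `^ r)%E.
  by move=> l l1; apply: mule_ge0; [rewrite lee_fin; exact: ltW (w0 l l1)|exact: poweR_ge0].
have S0 : (0 <= S)%E by apply: nneseries_ge0 => n _; exact: x0.
have Sfin : (S < +oo)%E.
  rewrite ltNge leye_eq; apply/negP => /eqP hS; move: hN.
  by rewrite hS poweRyr ?ltxx // invr_neq0 // gt_eqF.
set s := fine S.
have Se : S = s%:E by rewrite /s fineK // ge0_fin_numE.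
have s0 : 0 <= s by rewrite /s fine_ge0.
have xS : forall l, (0 < l)%N -> ((w l)%:E * L l `^ r <= S)%E.
  move=> l l1; apply: le_trans (nneseries_lim_ge l.+1 _); last first.
    by move=> n _; exact: x0.
  rewrite big_mkcond big_nat_recr //= l1 addeC leeDl //.
  by apply: sume_ge0 => i _; case: ifP => // /x0.
have Lfin : forall l, (0 < l)%N -> L l \is a fin_num.
  move=> l l1; rewrite ge0_fin_numE // ltNge leye_eq; apply/negP => /eqP hL.
  have := xS l l1; rewrite hL poweRyr ?gt_eqF // mulry gtr0_sg ?w0 // mul1e.
  by rewrite leye_eq => /eqP hS; move: Sfin; rewrite hS ltxx.
set K := s `^ ((q - r) / r).
have pw : forall l, (0 < l)%N ->
    ((v l)%:E * L l `^ q <= K%:E * ((w l)%:E * L l `^ r))%E.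
  move=> l l1; have := xS l l1; rewrite Se -(fineK (Lfin l l1)) !poweR_EFin.
  rewrite -!EFinM !lee_fin => h.
  by apply: pt_ineq => //; [exact: ltW (w0 l l1)|exact: fine_ge0|exact: vw].
have T : (\sum_(1 <= l <oo | (0 < l)%N) ((v l)%:E * L l `^ q) <= (K * s)%:E)%E.
  rewrite EFinM -Se -nneseriesZl; last by move=> i /x0.
  apply: lee_nneseries => //.
  by move=> i _ i1; apply: mule_ge0; [rewrite lee_fin; exact: (v0 _ i1)|exact: poweR_ge0].
set Y := (\sum_(1 <= l <oo | (0 < l)%N) ((v l)%:E * L l `^ q))%E in T *.
have Y0 : (0 <= Y)%E.
  by apply: nneseries_ge0 => n _ n1; apply: mule_ge0; [rewrite lee_fin; exact: (v0 _ n1)|exact: poweR_ge0].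
have Ye : Y = (fine Y)%:E by rewrite fineK // ge0_fin_numE // (le_lt_trans T) // ltry.
rewrite Ye Se !poweR_EFin lee_fin.
have hq : (q - r) / r + 1 != 0.
  by rewrite gt_eqF // (lt_le_trans ltr01) // lerDr divr_ge0 // ?subr_ge0 // ltW.
have Ks : K * s = s `^ (q / r).
  rewrite /K -{2}(powRr1 s0) -powRD; last by apply/implyP; rewrite (negbTE hq).
  by congr (_ `^ _); field; rewrite gt_eqF.
have -> : s `^ r^-1 = (K * s) `^ q^-1.
  by rewrite Ks -powRrM; congr (_ `^ _); field; rewrite !gt_eqF.
apply: ge0_ler_powR.
- by rewrite invr_ge0 ltW.
- by rewrite nnegrE fine_ge0.
- by rewrite nnegrE mulr_ge0 // powR_ge0.
- by rewrite -lee_fin -Ye.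
Qed.

Lemma sum1_cond (R : realType) (F : nat -> \bar R) :
  (\sum_(1 <= l <oo) F l = \sum_(1 <= l <oo | (0 < l)%N) F l)%E.
Proof.
congr (limn _); apply/funext => n.
rewrite big_nat_cond [RHS]big_nat_cond; apply: eq_bigl => i.
by case: (boolP (1 <= i < n)%N) => //= /andP[->].
Qed.

Theorem proposition4p1 (R : realType) (d : nat) (Tmax : R) (Tset : set R)
  (q qd sd s' : R) :
  (1 <= d)%N ->
  measurable Tset -> Tset `<=` `[0, Tmax] ->
  1 <= q <= 2 -> 1 <= qd <= 2 ->
  s' < sd - Num.max (d%:R / qd - d%:R / q) 0 ->
  continuously_embedded d Tset sd (Num.min qd q) q s' q q.
Proof.
move=> d1 _ _ /andP[q1 _] /andP[qd1 _] hs.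
have htau := @tau_ineq R d q qd sd s' d1 q1 qd1 hs.
set r := Num.min qd q in htau *.
have q0 : 0 < q by apply: lt_le_trans q1.
have r1 : 1 <= r by rewrite /r le_min qd1 q1.
have r0 : 0 < r by apply: lt_le_trans r1.
have rq : r <= q by rewrite /r ge_min lexx orbT.
suff main : forall u, besov_space d Tset sd r q u ->
    (besov_norm d Tset s' q q u <= besov_norm d Tset sd r q u)%E.
  split.
    move=> u hu; have h := main u hu; move: hu; rewrite /besov_space /= => hu.
    exact: le_lt_trans h hu.
  by exists 1; split => // u hu; rewrite mul1e; exact: main.
move=> u; rewrite /besov_space /besov_norm /= !sum1_cond => hN.
apply: (@series_ineq R r q (fun l : nat => l%:R `^ (tau d r sd * r))
   (fun l : nat => l%:R `^ (tau d q s' * q))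
   (fun l => Lp_T Tset q (u l))) => //.
- by move=> l l1; rewrite powR_gt0 // ltr0n.
- move=> l l1; rewrite -powRrM; apply: ler_powR; last exact: htau.
  by rewrite ler1n.
- by move=> l; exact: Lnorm_ge0.
Qed.
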